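(* Let $(\mathcal Q,d)$ be a Hadamard space, $Y$ a $\mathcal Q$-valued random variable, $o\in\mathcal Q$, and $\tau\in\mathcal S_0^+$ with $\mathbb E[\tau'(d(Y,o))]<\infty$. Then: (i) the variance functional $v:\mathcal Q\to\mathbb R$, $v(q):=\mathbb E[\tau(d(Y,q))-\tau(d(Y,o))]$, is (well-defined and) convex; (ii) the set $M:=\arg\min_{q\in\mathcal Q}v(q)$ of $\tau$-Fréchet means is nonempty, closed, bounded and convex, and does not depend on the choice of $o$; (iii) if $\mathcal Y\subset\mathcal Q$ is closed and convex with $\mathbb P(Y\in\mathcal Y)=1$, then $M\subset\mathcal Y$.
   Context: A Hadamard space is a complete metric space $(\mathcal Q,d)$ such that for all $y_0,y_1$ there is $m$ with $\frac12 d(y_0,q)^2+\frac12 d(y_1,q)^2-\frac14 d(y_0,y_1)^2\ge d(q,m)^2$ for all $q$; in it any $q\ne p$ are joined by a unique unit-speed geodesic $\gamma_{q\to p}:[0,d(q,p)]\to\mathcal Q$. A set $A\subset\mathcal Q$ is convex if $\gamma_{q\to p}$ has image in $A$ for all $q\ne p$ in $A$; a function $f:\mathcal Q\to\mathbb R$ is convex if $f\circ\gamma_{q\to p}$ is convex for all $q\ne p$. $\mathcal S_0^+$ is the set of nondecreasing convex $\tau:[0,\infty)\to\mathbb R$, differentiable on $(0,\infty)$ with concave derivative $\tau'$ (with $\tau'(0):=\lim_{x\searrow0}\tau'(x)$), such that $\tau(0)=0$ and $\tau'(x)>0$ for $x>0$. *)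

(* Defs.v *)
From HB Require Import structures.
From mathcomp Require Import all_boot all_order all_algebra.
From mathcomp Require Import all_classical all_reals all_analysis.
Set Implicit Arguments. Unset Strict Implicit. Unset Printing Implicit Defensive.
Import Order.TTheory GRing.Theory Num.Theory.
Import numFieldNormedType.Exports.
Local Open Scope classical_set_scope.
Local Open Scope ring_scope.

Section HadamardDefs.
Variables (R : realType) (Q : Type) (d : Q -> Q -> R).

Definition is_metric : Prop :=
  [/\ forall x y, d x y = 0 <-> x = y,
      forall x y, d x y = d y x &
      forall x y z, d x z <= d x y + d y z].

Definition d_complete : Prop :=
  forall u : nat -> Q,
    (forall e, 0 < e -> exists N, forall m n, (N <= m)%N -> (N <= n)%N -> d (u m) (u n) < e) ->
    exists l, forall e, 0 < e -> exists N, forall n, (N <= n)%N -> d (u n) l < e.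

Definition hadamard : Prop :=
  [/\ is_metric, d_complete &
      forall y0 y1, exists m, forall q,
        d q m ^+ 2 <= 2^-1 * d y0 q ^+ 2 + 2^-1 * d y1 q ^+ 2 - 4^-1 * d y0 y1 ^+ 2].

Definition geodesic (q p : Q) (g : R -> Q) : Prop :=
  [/\ g 0 = q, g (d q p) = p &
      forall s t, 0 <= s <= d q p -> 0 <= t <= d q p -> d (g s) (g t) = `|s - t|].

(* convex sets and functions (along every, i.e. the unique, geodesic) *)
Definition d_convex_set (A : set Q) : Prop :=
  forall q p g, A q -> A p -> q <> p -> geodesic q p g ->
    forall t, 0 <= t <= d q p -> A (g t).

Definition convex_on (I : set R) (f : R -> R) : Prop :=
  forall x y t, I x -> I y -> 0 <= t <= 1 ->
    f ((1 - t) * x + t * y) <= (1 - t) * f x + t * f y.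

Definition concave_on (I : set R) (f : R -> R) : Prop :=
  forall x y t, I x -> I y -> 0 <= t <= 1 ->
    (1 - t) * f x + t * f y <= f ((1 - t) * x + t * y).

Definition d_convex_fun (f : Q -> R) : Prop :=
  forall q p g, q <> p -> geodesic q p g ->
    convex_on [set t | 0 <= t <= d q p] (f \o g).

Definition d_open (U : set Q) : Prop :=
  forall x, U x -> exists2 e, 0 < e & forall y, d x y < e -> U y.

Definition d_closed (A : set Q) : Prop :=
  forall x, (forall e, 0 < e -> exists y, A y /\ d x y < e) -> A x.

Definition d_bounded (A : set Q) : Prop :=
  exists c r, forall q, A q -> d c q <= r.

Definition d_measurable {dm} {T : measurableType dm} (Y : T -> Q) : Prop :=
  forall U, d_open U -> measurable (Y @^-1` U).

End HadamardDefs.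

(* The class S_0^+ ; tau is given on R but only its values on [0,oo) matter *)
Definition dtau {R : realType} (tau : R -> R) (x : R) : R :=
  if 0 < x then (derive1 tau) x else lim ((derive1 tau) @ 0^'+).

Definition S0plus {R : realType} (tau : R -> R) : Prop :=
  [/\ (forall x y, 0 <= x -> x <= y -> tau x <= tau y),
      convex_on [set x | 0 <= x] tau,
      (forall x, 0 < x -> derivable tau x 1) &
      [/\ concave_on [set x | 0 < x] (derive1 tau),
      tau 0 = 0 &
      forall x, 0 < x -> 0 < derive1 tau x]].

Definition var_fun {R : realType} {Q : Type} (d : Q -> Q -> R) {dm}
  {T : measurableType dm} (P : probability T R) (Y : T -> Q) (tau : R -> R)
  (o q : Q) : R :=
  fine (\int[P]_w (tau (d (Y w) q) - tau (d (Y w) o))%:E)%E.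

Definition argmin {R : realType} {Q : Type} (v : Q -> R) : set Q :=
  [set q | forall p, v q <= v p].

(* Main.v *)
Require Import Defs.
From HB Require Import structures.
From mathcomp Require Import all_boot all_order all_algebra.
From mathcomp Require Import all_classical all_reals all_analysis.
From mathcomp Require Import ring lra.
From mathcomp Require Import measurable_realfun.
Set Implicit Arguments. Unset Strict Implicit. Unset Printing Implicit Defensive.
Import Order.TTheory GRing.Theory Num.Theory.
Import numFieldNormedType.Exports.
Local Open Scope classical_set_scope.
Local Open Scope ring_scope.

Section Gen.
Context {R : realType}.
Lemma sq_le (a b : R) : 0 <= a -> 0 <= b -> a ^+ 2 <= b ^+ 2 -> a <= b.
Proof. move=> ha hb h; rewrite !expr2 in h; nra. Qed.
Lemma small_inv (e : R) : 0 < e -> exists N : nat, N.+1%:R^-1 < e.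
Proof. by move=> e0; have [k] := ltr_add_invr e0; rewrite add0r; exists k. Qed.
Lemma inv_mono (N n : nat) : (N <= n)%N -> (n.+1%:R : R)^-1 <= N.+1%:R^-1.
Proof. by move=> h; rewrite lef_pV2 ?posrE ?ltr0n // ler_nat ltnS. Qed.
Lemma le_approx (A B K : R) : 0 <= K ->
  (forall e, 0 < e -> e <= 1 -> A <= B + e * K) -> A <= B.
Proof.
move=> K0 H; apply/ler_addgt0Pr => e e0.
set t := Num.min 1 (e / (K + 1)).
have t0 : 0 < t by rewrite lt_min ltr01 divr_gt0 //; lra.
have t1 : t <= 1 by rewrite ge_min lexx.
have t2 : t <= e / (K + 1) by rewrite ge_min lexx orbT.
have := H t t0 t1.
have : t * K <= e.
  have : t * (K + 1) <= e by rewrite -ler_pdivlMr //; lra.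
  nra.
lra.
Qed.
End Gen.

Section Geo.
Variables (R : realType) (Q : Type) (d : Q -> Q -> R).
Hypothesis Hh : hadamard d.

Lemma d_eq0 x y : d x y = 0 <-> x = y.
Proof. by case: Hh => [[]]. Qed.
Lemma dxx x : d x x = 0.
Proof. by apply/d_eq0. Qed.
Lemma dC x y : d x y = d y x.
Proof. by case: Hh => [[]]. Qed.
Lemma dtri x y z : d x z <= d x y + d y z.
Proof. by case: Hh => [[]]. Qed.
Lemma dge0 x y : 0 <= d x y.
Proof. have := dtri x y x; rewrite dxx (dC y x); lra. Qed.
Lemma dmid y0 y1 : exists m, forall q,
  d q m ^+ 2 <= 2^-1 * d y0 q ^+ 2 + 2^-1 * d y1 q ^+ 2 - 4^-1 * d y0 y1 ^+ 2.
Proof. by case: Hh. Qed.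
Lemma dcompl : d_complete d.
Proof. by case: Hh. Qed.

Definition CN q p t z := forall x,
  d x z ^+ 2 <= (1 - t) * d x q ^+ 2 + t * d x p ^+ 2 - t * (1 - t) * d q p ^+ 2.



Lemma CN_dist q p t z : 0 <= t <= 1 -> CN q p t z ->
  d q z = t * d q p /\ d z p = (1 - t) * d q p.
Proof.
move=> /andP[t0 t1] H.
have h1 := H q; have h2 := H p.
rewrite dxx in h1; rewrite dxx (dC p q) (dC p z) in h2.
have hD := dge0 q p.
have a1 : d q z <= t * d q p.
  apply: sq_le; rewrite ?dge0 //; first by nra.
  rewrite !expr2 in h1 *; nra.
have a2 : d z p <= (1 - t) * d q p.
  apply: sq_le; rewrite ?dge0 //; first by nra.
  rewrite !expr2 in h2 *; nra.
have := dtri q z p; split; lra.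
Qed.

Lemma CN_of_dist q p t w z : 0 <= t <= 1 -> CN q p t z ->
  d q w = t * d q p -> d w p = (1 - t) * d q p -> w = z.
Proof.
move=> ht H h1 h2; apply/d_eq0.
have := H w; rewrite (dC w q) h1 h2 => h.
have : d w z ^+ 2 <= 0 by rewrite !expr2 in h *; nra.
rewrite !expr2 => h'; have := dge0 w z; nra.
Qed.

Lemma CN_lip q p a b za zb : 0 <= a <= 1 -> 0 <= b <= 1 ->
  CN q p a za -> CN q p b zb -> d za zb <= `|a - b| * d q p.
Proof.
move=> ha hb Ha Hb.
have [e1 e2] := CN_dist ha Ha.
have := Hb za; rewrite (dC za q) e1 e2 => h.
apply: sq_le; rewrite ?dge0 //; first by rewrite mulr_ge0 ?dge0.
rewrite exprMn real_normK ?num_real //; rewrite !expr2 in h *; nra.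
Qed.

Lemma CN_lip_ge q p a b za zb : 0 <= a <= 1 -> 0 <= b <= 1 ->
  CN q p a za -> CN q p b zb -> `|a - b| * d q p <= d za zb.
Proof.
move=> ha hb Ha Hb.
have [e1 e2] := CN_dist ha Ha; have [e3 e4] := CN_dist hb Hb.
have h1 := dtri q za zb; have h2 := dtri q zb za; rewrite (dC zb za) in h2.
have hD := dge0 q p.
case: (lerP a b) => hab; nra.
Qed.

Lemma CN_mid q p l r a b : 0 <= l -> l <= r -> r <= 1 -> CN q p l a -> CN q p r b ->
  exists m, CN q p ((l + r) / 2) m.
Proof.
move=> l0 lr r1 Ha Hb.
have hl : 0 <= l <= 1 by apply/andP; split => //; lra.
have hr : 0 <= r <= 1 by apply/andP; split => //; lra.
have hab := CN_lip_ge hl hr Ha Hb.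
have hD := dge0 q p.
rewrite (ler0_norm (x := l - r)) ?subr_le0 // opprB in hab.
have sq : (r - l) ^+ 2 * d q p ^+ 2 <= d a b ^+ 2.
  rewrite -exprMn; apply: lerXn2r; rewrite ?nnegrE ?dge0 //; nra.
have [m Hm] := dmid a b; exists m => x.
have h1 := Ha x; have h2 := Hb x; have h3 := Hm x.
rewrite (dC a x) (dC b x) in h3.
have e : ((l + r) / 2) = l / 2 + r / 2 by rewrite mulrDl.
rewrite e.
have i2 : (2 : R)^-1 = 1/2 by rewrite div1r.
have i4 : (4 : R)^-1 = 1/4 by rewrite div1r.
rewrite i2 i4 in h3.
rewrite !expr2 in sq h1 h2 h3 *.
lra.
Qed.

Lemma inv_half (n : nat) : (n.+1%:R : R)^-1 / 2 <= n.+2%:R^-1.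
Proof.
have x1 : (1 : R) <= n.+1%:R by rewrite ler1n.
have e : (n.+2%:R : R) = n.+1%:R + 1 by rewrite -natr1.
rewrite e -subr_ge0.
have -> : (n.+1%:R + 1)^-1 - (n.+1%:R : R)^-1 / 2 =
   (n.+1%:R - 1) / (2 * n.+1%:R * (n.+1%:R + 1)).
  field; apply/andP; split; lra.
apply: divr_ge0; first lra.
apply: mulr_ge0; last lra; apply: mulr_ge0; lra.
Qed.

Lemma CN_q q p : CN q p 0 q.
Proof. move=> x; lra. Qed.
Lemma CN_p q p : CN q p 1 p.
Proof. move=> x; lra. Qed.

Lemma bisect q p s : 0 <= s <= 1 -> forall n : nat,
  exists l r a b, [/\ 0 <= l, l <= s, s <= r, r <= 1 &
     r - l <= n.+1%:R^-1] /\ CN q p l a /\ CN q p r b.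
Proof.
move=> /andP[s0 s1]; elim=> [|n [l [r [a [b [[l0 ls sr r1 hlr] [Ha Hb]]]]]]].
  exists 0, 1, q, p; split; [split => //; by rewrite subr0 invr1|split; [exact: CN_q|exact: CN_p]].
have lr : l <= r by lra.
have [m Hm] := CN_mid l0 lr r1 Ha Hb.
have hh := inv_half n.
case: (lerP s ((l + r) / 2)) => hs.
  exists l, ((l + r) / 2), a, m; split => //; split => //; try lra.
  have -> : (l + r) / 2 - l = (r - l) / 2 by field.
  apply: le_trans hh; rewrite ler_pM2r //; lra.
exists ((l + r) / 2), r, m, b; split => //; split => //; try lra.
have -> : r - (l + r) / 2 = (r - l) / 2 by field.
apply: le_trans hh; rewrite ler_pM2r //; lra.
Qed.







Lemma Bdiff (A P D2 l s e : R) : 0 <= A -> 0 <= P -> 0 <= D2 ->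
  0 <= l <= 1 -> 0 <= s <= 1 -> `|l - s| <= e ->
  (1 - l) * A + l * P - l * (1 - l) * D2 <=
  (1 - s) * A + s * P - s * (1 - s) * D2 + e * (A + P + D2).
Proof.
move=> hA hP hD /andP[l0 l1] /andP[s0 s1].
have -> : (1 - l) * A + l * P - l * (1 - l) * D2 =
  (1 - s) * A + s * P - s * (1 - s) * D2 + (l - s) * (P - A - (1 - l - s) * D2)
  by ring.
move=> he; rewrite lerD2l.
have : (l - s) * (P - A - (1 - l - s) * D2) <= `|l - s| * (A + P + D2).
  apply: le_trans (ler_norm _) _; rewrite normrM ler_wpM2l //.
  apply: le_trans (ler_normD _ _) _; rewrite normrN.
  apply: le_trans (lerD (ler_normD _ _) (lexx _)) _.
  rewrite normrN normrM (ger0_norm hP) (ger0_norm hA) (ger0_norm hD).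
  have : `|1 - l - s| <= 1.
    by rewrite ler_norml; apply/andP; split; lra.
  nra.
move=> h; apply: le_trans h _; apply: ler_wpM2r => //; lra.
Qed.

Lemma CN_exists q p s : 0 <= s <= 1 -> exists z, CN q p s z.
Proof.
move=> hs.
have H (n : nat) : exists la : R * Q,
    [/\ 0 <= la.1 <= 1, `|la.1 - s| <= n.+1%:R^-1 & CN q p la.1 la.2].
  have [l [r [a [b [[l0 ls sr r1 hlr] [Ha Hb]]]]]] := bisect q p hs n.
  exists (l, a); split => //=.
    apply/andP; split => //; move: hs => /andP[_ s1]; lra.
  rewrite (ler0_norm (x := l - s)) ?subr_le0 //.
  move: hlr; set i := _^-1; lra.
have [f Hf] := choice H.
set D := d q p.
have hD : 0 <= D by apply: dge0.
have Cau : forall e, 0 < e -> exists N, forall m n, (N <= m)%N -> (N <= n)%N ->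
    d (f m).2 (f n).2 < e.
  move=> e e0.
  have D1 : 0 < 2 * D + 1 by lra.
  have [N hN] := small_inv (divr_gt0 e0 D1).
  exists N => m n hm hn.
  have [hm1 hm2 hm3] := Hf m; have [hn1 hn2 hn3] := Hf n.
  have := CN_lip hm1 hn1 hm3 hn3.
  have i1 := inv_mono (R := R) hm; have i2 := inv_mono (R := R) hn.
  have : `|(f m).1 - (f n).1| <= 2 * N.+1%:R^-1.
    apply: le_trans (_ : `|(f m).1 - s| + `|(f n).1 - s| <= _).
      have -> : (f m).1 - (f n).1 = ((f m).1 - s) - ((f n).1 - s) by ring.
      by apply: le_trans (ler_normB _ _) _.
    move: hm2 hn2 i1 i2; move: (m.+1%:R^-1) (n.+1%:R^-1) (N.+1%:R^-1) => u v w; lra.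
  have : N.+1%:R^-1 * (2 * D + 1) < e by rewrite -ltr_pdivlMr.
  rewrite -/D; move=> a1 a2 a3.
  have : `|(f m).1 - (f n).1| * D <= 2 * N.+1%:R^-1 * D by rewrite ler_wpM2r.
  have : 0 <= (N.+1%:R : R)^-1 by rewrite invr_ge0.
  set w := (N.+1%:R^-1 : R) in a1 a2 *; nra.
have [z Hz] := dcompl Cau.
exists z => x.
set A := d x q ^+ 2; set P := d x p ^+ 2.
apply: (@le_approx _ _ _ (2 * (d x q + D) + 1 + (A + P + D ^+ 2))).
  apply: addr_ge0; [apply: addr_ge0 => //; apply: mulr_ge0 => //; apply: addr_ge0 => //;
    apply: dge0 | apply: addr_ge0; [apply: addr_ge0|]; apply: sqr_ge0].
move=> e e0 e1.
have [N1 hN1] := Hz e e0.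
have [N2 hN2] := small_inv e0.
set n := maxn N1 N2.
have [hn1 hn2 hn3] := Hf n.
have dz := hN1 n (leq_maxl _ _).
have ln : `|(f n).1 - s| <= e.
  apply: le_trans hn2 _; apply: le_trans (ltW hN2); apply: (inv_mono (R := R)); exact: leq_maxr.
have [e3 _] := CN_dist hn1 hn3.
have t1 := dtri x (f n).2 z.
have t2 := dtri x q (f n).2.
have bx := hn3 x.
have hA : 0 <= A by apply: sqr_ge0.
have hP : 0 <= P by apply: sqr_ge0.
have hb := Bdiff hA hP (sqr_ge0 D) hn1 hs ln.
rewrite -/A -/P -/D in bx hb.
have g1 : 0 <= d x (f n).2 by apply: dge0.
have g2 : 0 <= d x z by apply: dge0.
have g3 : 0 <= d x q by apply: dge0.
move: hn1 => /andP[l0 l1].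
have e4 : d q (f n).2 <= D by rewrite e3 -/D; nra.
have : d x z ^+ 2 <= (d x (f n).2 + e) ^+ 2.
  apply: lerXn2r; rewrite ?nnegrE //; lra.
rewrite -/D; move=> sq.
rewrite !expr2 in sq bx hb *.
nra.
Qed.

Lemma CN_in_convex S q p t z : d_convex_set d S -> S q -> S p -> 0 <= t <= 1 ->
  CN q p t z -> S z.
Proof.
move=> cS Sq Sp ht Hz.
have [e1 e2] := CN_dist ht Hz.
have [qp|qp] := pselect (q = p).
  subst p; rewrite dxx mulr0 in e1; move/d_eq0: e1 => <-; exact Sq.
set D := d q p.
have D0 : 0 < D.
  rewrite lt_def dge0 andbT; apply/eqP => /d_eq0; exact: qp.
have H (u : R) : exists w, 0 <= u / D <= 1 -> CN q p (u / D) w.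
  have [hu|hu] := pselect (0 <= u / D <= 1).
    by have [w Hw] := CN_exists q p hu; exists w.
  by exists q.
have [g Hg] := choice H.
have gin u : 0 <= u <= D -> 0 <= u / D <= 1.
  move=> /andP[u0 u1]; apply/andP; split; first exact: divr_ge0 (ltW D0).
  by rewrite ler_pdivrMr // mul1r.
have geo : geodesic d q p g.
  split.
  - have := Hg 0; rewrite mul0r => /(_ (ltac:(apply/andP; split; lra))) h0.
    have [h1 _] := CN_dist (ltac:(apply/andP; split; lra) : 0 <= (0:R) <= 1) h0.
    by move: h1; rewrite mul0r => /d_eq0 <-.
  - have := Hg D; rewrite divff ?gt_eqF // => /(_ (ltac:(apply/andP; split; lra))) h0.
    have [_ h1] := CN_dist (ltac:(apply/andP; split; lra) : 0 <= (1:R) <= 1) h0.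
    by move: h1; rewrite subrr mul0r => /d_eq0 ->.
  - move=> s u hs hu.
    have gs := gin _ hs; have gu := gin _ hu.
    have Ls := Hg s gs; have Lu := Hg u gu.
    have a1 := CN_lip gs gu Ls Lu; have a2 := CN_lip_ge gs gu Ls Lu.
    rewrite -/D in a1 a2; move: a1 a2.
    have -> : `|s / D - u / D| * D = `|s - u|.
      by rewrite -mulrBl normrM (gtr0_norm (x := D^-1)) ?invr_gt0 // -mulrA mulVf ?gt_eqF // mulr1.
    move=> a1 a2; apply/eqP; rewrite eq_le a1 a2 //.
have htD : 0 <= t * D <= D.
  move: ht => /andP[t0 t1]; apply/andP; split; nra.
have := cS q p g Sq Sp qp geo (t * D) htD.
have Hw := Hg (t * D) (gin _ htD).
rewrite mulfK ?gt_eqF // in Hw.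
have [e3 e4] := CN_dist ht Hw.
suff -> : z = g (t * D) by [].
apply: (CN_of_dist ht Hw); by rewrite -/D.
Qed.

Lemma geo_CN q p g x y l : geodesic d q p g ->
  0 <= x <= d q p -> 0 <= y <= d q p -> 0 <= l <= 1 ->
  CN (g x) (g y) l (g ((1 - l) * x + l * y)).
Proof.
move=> [g0 g1 gi] hx hy hl.
have hu : 0 <= (1 - l) * x + l * y <= d q p.
  move: hx hy hl => /andP[x0 x1] /andP[y0 y1] /andP[l0 l1]; apply/andP; split; nra.
have [z Hz] := CN_exists (g x) (g y) hl.
have exy := gi x y hx hy.
have -> : g ((1 - l) * x + l * y) = z; last exact: Hz.
apply: (CN_of_dist hl Hz).
  rewrite gi // exy.
  have -> : x - ((1 - l) * x + l * y) = l * (x - y) by ring.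
  rewrite normrM ger0_norm //; by case/andP: hl.
rewrite gi // exy.
have -> : (1 - l) * x + l * y - y = (1 - l) * (x - y) by ring.
rewrite normrM ger0_norm //; move: hl => /andP[_ l1]; lra.
Qed.

Lemma CN_dconvex q p t z x : 0 <= t <= 1 -> CN q p t z ->
  d x z <= (1 - t) * d x q + t * d x p.
Proof.
move=> ht Hz; have h := Hz x.
have t1 := dtri x p q; have t2 := dtri x q p.
rewrite (dC p q) in t1.
have g1 := dge0 x q; have g2 := dge0 x p; have g3 := dge0 q p.
move: ht => /andP[t0 t1'].
apply: sq_le; [exact: dge0| nra |].
have : (d x q - d x p) ^+ 2 <= d q p ^+ 2.
  rewrite !expr2; nra.
move=> h2; have tt : 0 <= t * (1 - t) by nra.
have := ler_wpM2l tt h2 => h3.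
rewrite !expr2 in h h3 *; nra.
Qed.

Lemma proj_exists (S : set Q) x : S !=set0 -> d_closed d S -> d_convex_set d S ->
  exists p, S p /\ forall y, S y -> d p y ^+ 2 <= d x y ^+ 2 - d x p ^+ 2.
Proof.
move=> [y0 Sy0] clS cS.
set E := [set d x y | y in S].
have hE : has_inf E.
  split; first by exists (d x y0), y0.
  by exists 0 => r [y _ <-]; apply: dge0.
set del := inf E.
have dl y : S y -> del <= d x y.
  move=> Sy; apply: ge_inf; last by exists y. by case: hE.
have del0 : 0 <= del.
  apply: lb_le_inf; first by exists (d x y0), y0.
  by move=> r [y _ <-]; apply: dge0.
have H (n : nat) : exists y, S y /\ d x y < del + n.+1%:R^-1.
  have i0 : 0 < (n.+1%:R : R)^-1 by rewrite invr_gt0 ltr0n.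
  have [r [y Sy <-] h] := inf_adherent i0 hE.
  by exists y.
have [f Hf] := choice H.
have midb m n : d (f m) (f n) ^+ 2 <= 2 * (m.+1%:R^-1 * (2 * del + 1)) + 2 * (n.+1%:R^-1 * (2 * del + 1)).
  have [Sm hm] := Hf m; have [Sn hn] := Hf n.
  have ht : 0 <= (2:R)^-1 <= 1 by apply/andP; split; [rewrite invr_ge0 | rewrite invf_le1]; lra.
  have [z Hz] := CN_exists (f m) (f n) ht.
  have Sz := CN_in_convex cS Sm Sn ht Hz.
  have h := Hz x; have hz := dl _ Sz.
  have im : 0 <= (m.+1%:R : R)^-1 <= 1 by rewrite invr_ge0 ler0n invf_le1 ?ler1n ?ltr0n.
  have iN : 0 <= (n.+1%:R : R)^-1 <= 1 by rewrite invr_ge0 ler0n invf_le1 ?ler1n ?ltr0n.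
  have a1 := dl _ Sm; have a2 := dl _ Sn.
  have i2 : (2 : R)^-1 = 1/2 by rewrite div1r.
  rewrite i2 in h.
  move: im iN hm hn; set u := (m.+1%:R^-1 : R); set v := (n.+1%:R^-1 : R).
  move=> /andP[u0 u1] /andP[v0 v1] hm hn.
  have : del ^+ 2 <= d x z ^+ 2 by apply: lerXn2r; rewrite ?nnegrE ?dge0.
  rewrite !expr2 in h *; nra.
have Cau : forall e, 0 < e -> exists N, forall m n, (N <= m)%N -> (N <= n)%N ->
    d (f m) (f n) < e.
  move=> e e0.
  have c0 : 0 < e * e / (4 * (2 * del + 1)) by apply: divr_gt0; nra.
  have [N hN] := small_inv c0.
  exists N => m n hm hn.
  have := midb m n; have i1 := inv_mono (R := R) hm; have i2 := inv_mono (R := R) hn.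
  have : N.+1%:R^-1 * (4 * (2 * del + 1)) < e * e by rewrite -ltr_pdivlMr //; lra.
  have im : 0 <= (m.+1%:R : R)^-1 by rewrite invr_ge0.
  have iN : 0 <= (n.+1%:R : R)^-1 by rewrite invr_ge0.
  move: i1 i2 im iN; set u := (m.+1%:R^-1 : R); set v := (n.+1%:R^-1 : R);
    set w := (N.+1%:R^-1 : R) => i1 i2 im iN a1 a2.
  have g := dge0 (f m) (f n).
  rewrite expr2 in a2.
  apply: (@lt_le_trans _ _ e); last by [].
  have : d (f m) (f n) * d (f m) (f n) < e * e by nra.
  nra.
have [p Hp] := dcompl Cau.
have Sp : S p.
  apply: clS => e e0; have [N hN] := Hp e e0.
  exists (f N); split; first by case: (Hf N).
  by rewrite dC; apply: hN.
have dxp : d x p = del.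
  apply/eqP; rewrite eq_le dl // andbT.
  apply/ler_addgt0Pr => e e0.
  have e2 : 0 < e / 2 by apply: divr_gt0.
  have [N1 hN1] := Hp _ e2.
  have [N2 hN2] := small_inv e2.
  set n := maxn N1 N2.
  have h1 := hN1 n (leq_maxl _ _).
  have [_ h2] := Hf n.
  have h3 := inv_mono (R := R) (leq_maxr N1 N2); rewrite -/n in h3.
  have := dtri x (f n) p.
  move: h2 h3 hN2; set u := (n.+1%:R^-1 : R); set w := (N2.+1%:R^-1 : R) => h2 h3 h4.
  lra.
exists p; split => // y Sy.
rewrite dxp.
apply: (@le_approx _ _ _ (d p y ^+ 2)); first exact: sqr_ge0.
move=> t t0 t1.
have ht : 0 <= t <= 1 by apply/andP; split; lra.
have [z Hz] := CN_exists p y ht.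
have Sz := CN_in_convex cS Sp Sy ht Hz.
have h := Hz x; have hz := dl _ Sz.
rewrite dxp in h.
have : del ^+ 2 <= d x z ^+ 2 by apply: lerXn2r; rewrite ?nnegrE ?dge0.
move=> h2.
have : t * ((1 - t) * d p y ^+ 2) <= t * (d x y ^+ 2 - del ^+ 2) by lra.
rewrite ler_pM2l // => h3.
lra.
Qed.

End Geo.

Section Tau.
Variable R : realType.
Variable tau : R -> R.
Hypothesis Ht : S0plus tau.

Local Notation f := (derive1 tau).

Lemma tau_mono x y : 0 <= x -> x <= y -> tau x <= tau y.
Proof. by move=> x0 xy; case: Ht => h _ _ _; apply: h. Qed.
Lemma tau_cvx : convex_on [set x | 0 <= x] tau.
Proof. by case: Ht. Qed.
Lemma tau_der x : 0 < x -> derivable tau x 1.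
Proof. by move=> x0; case: Ht => _ _ h _; apply: h. Qed.
Lemma f_conc : concave_on [set x | 0 < x] f.
Proof. by case: Ht => _ _ _ [] . Qed.
Lemma tau0 : tau 0 = 0.
Proof. by case: Ht => _ _ _ []. Qed.
Lemma f_pos x : 0 < x -> 0 < f x.
Proof. by case: Ht => _ _ _ [] _ _ h; apply: h. Qed.
Lemma tau_ge0 x : 0 <= x -> 0 <= tau x.
Proof. by move=> x0; rewrite -tau0; apply: tau_mono. Qed.

Lemma der_cvg y : 0 < y ->
  (fun h => h^-1 * (tau (h + y) - tau y)) @ 0^' --> f y.
Proof.
move=> y0; have := tau_der y0; rewrite /derivable.
have -> : (fun h : R => h^-1 *: ((tau \o shift y) (h *: (1:R)) - tau y)) =
          (fun h => h^-1 * (tau (h + y) - tau y)).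
  by apply: funext => h /=; rewrite /shift /= [h *: _]mulr1.
by [].
Qed.

Lemma dnbhs_right (g : R -> R) (l : R) : g @ (0:R)^' --> l -> g @ (0:R)^'+ --> l.
Proof.
move=> H; apply: cvg_trans H; move=> A /=; rewrite /dnbhs /at_right /within /=.
by apply: (@filterS _ (@nbhs R R (0:R))) => x H x0; apply: H; rewrite gt_eqF.
Qed.

Lemma dnbhs_left (g : R -> R) (l : R) : g @ (0:R)^' --> l -> g @ (0:R)^'- --> l.
Proof.
move=> H; apply: cvg_trans H; move=> A /=; rewrite /dnbhs /at_left /within /=.
by apply: (@filterS _ (@nbhs R R (0:R))) => x H x0; apply: H; rewrite lt_eqF.
Qed.

Lemma supp x y : 0 <= x -> 0 < y -> tau y + f y * (x - y) <= tau x.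
Proof.
move=> x0 y0.
have H := der_cvg y0.
case: (ltgtP y x) => hxy; last by rewrite hxy subrr mulr0 addr0.
- have xy0 : 0 < x - y by rewrite subr_gt0.
  suff : f y <= (tau x - tau y) / (x - y).
    by rewrite ler_pdivlMr // => h; lra.
  apply: (cvgr_to_le (dnbhs_right H)); near=> h.
  have h0 : 0 < h by near: h; exact: nbhs_right_gt.
  have h1 : h < x - y by near: h; exact: nbhs_right_lt.
  set t := h / (x - y).
  have t0 : 0 <= t <= 1.
    apply/andP; split; first by apply: divr_ge0; lra.
    by rewrite ler_pdivrMr // mul1r; lra.
  have := tau_cvx (y := x) (ltW y0) x0 t0.
  have -> : (1 - t) * y + t * x = h + y.
    by rewrite /t; field; lra.
  move=> hc.
  rewrite ler_pdivlMr //.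
  have -> : h^-1 * (tau (h + y) - tau y) * (x - y) = (tau (h + y) - tau y) / t.
    by rewrite /t; field; apply/andP; split; lra.
  have tp : 0 < t by rewrite /t divr_gt0.
  rewrite ler_pdivrMr //; lra.
- have xy0 : 0 < y - x by rewrite subr_gt0.
  suff : (tau y - tau x) / (y - x) <= f y.
    by rewrite ler_pdivrMr // => h; lra.
  apply: (cvgr_to_ge (dnbhs_left H)); near=> h.
  have h0 : h < 0 by near: h; exact: nbhs_left_lt.
  have h1 : - (y - x) < h by near: h; apply: nbhs_left_gt; lra.
  set t := - h / (y - x).
  have t0 : 0 <= t <= 1.
    apply/andP; split; first by apply: divr_ge0; lra.
    by rewrite ler_pdivrMr // mul1r; lra.
  have := tau_cvx (y := x) (ltW y0) x0 t0.
  have -> : (1 - t) * y + t * x = h + y.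
    by rewrite /t; field; lra.
  move=> hc.
  have tp : 0 < t by rewrite /t divr_gt0 //; lra.
  have -> : h^-1 * (tau (h + y) - tau y) = (tau y - tau (h + y)) / t / (y - x).
    by rewrite /t; field; apply/andP; split; lra.
  rewrite ler_pM2r ?invr_gt0 // ler_pdivlMr //.
  lra.
Unshelve. all: by end_near.
Qed.

Lemma f_mono a b : 0 < a -> a <= b -> f a <= f b.
Proof.
move=> a0 ab; have b0 : 0 < b by apply: lt_le_trans ab.
have [->|ab'] := eqVneq a b; first by [].
have h1 := supp (ltW a0) b0; have h2 := supp (ltW b0) a0.
have : 0 < b - a by rewrite subr_gt0 lt_neqAle ab' ab.
move=> d0.
have : (b - a) * (f a - f b) <= 0 by rewrite mulrDr mulrN !mulrBl; lra.
by rewrite pmulr_rle0 // subr_le0.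
Qed.

Lemma tau_lip x y : 0 <= x -> x <= y -> 0 < y -> tau y - tau x <= f y * (y - x).
Proof. move=> x0 xy y0; have := supp x0 y0; lra. Qed.

Lemma tau_smono x y : 0 <= x -> x < y -> tau x < tau y.
Proof.
move=> x0 xy; set z := (x + y) / 2.
have z0 : 0 < z by rewrite /z; apply: divr_gt0 => //; lra.
have zy : z < y by rewrite /z ltr_pdivrMr //; lra.
have xz : x <= z by rewrite /z ler_pdivlMr //; lra.
have h1 := tau_mono x0 xz.
have h2 := supp (ltW (lt_trans z0 zy)) z0.
have h3 : 0 < f z * (y - z) by apply: mulr_gt0; [apply: f_pos | rewrite subr_gt0].
lra.
Qed.

Lemma tau_lin c x : 0 < c -> 0 <= x -> f c * (x - c) <= tau x.
Proof. move=> c0 x0; have := supp x0 c0; have := tau_ge0 (ltW c0); lra. Qed.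

Lemma f_subadd a b : 0 < a -> 0 < b -> f (a + b) <= f a + f b.
Proof.
move=> a0 b0.
have fab := f_pos (addr_gt0 a0 b0).
apply: (@le_approx R _ _ (f (a + b))); first exact: ltW.
move=> e e0 e1.
set m := Num.min a b.
have m0 : 0 < m by rewrite lt_min a0 b0.
have ma : m <= a by rewrite ge_min lexx.
have mb : m <= b by rewrite ge_min lexx orbT.
set eps := e * m / 2.
have eps0 : 0 < eps by rewrite /eps; apply: divr_gt0 => //; apply: mulr_gt0.
have epsm : eps < m by rewrite /eps ltr_pdivrMr //; nra.
have key (u : R) : 0 < u -> u <= a + b ->  eps < u ->
    (u - eps) / (a + b - eps) * f (a + b) <= f u.
  move=> u0 uu ue.
  have abe : 0 < a + b - eps by lra.
  set t := (u - eps) / (a + b - eps).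
  have t0 : 0 <= t <= 1.
    apply/andP; split; first by apply: divr_ge0; lra.
    by rewrite ler_pdivrMr // mul1r; lra.
  have := f_conc (x := eps) (y := a + b) eps0 (addr_gt0 a0 b0) t0.
  have -> : (1 - t) * eps + t * (a + b) = u by rewrite /t; field; lra.
  have := f_pos eps0.
  have : 0 <= 1 - t by case/andP: t0 => _; lra.
  move=> t1 fe h; nra.
have ha := key a a0 (ltac:(lra)) (lt_le_trans epsm ma).
have hb := key b b0 (ltac:(lra)) (lt_le_trans epsm mb).
have abe : 0 < a + b - eps by lra.
have e2 : (a - eps) / (a + b - eps) * f (a + b) + (b - eps) / (a + b - eps) * f (a + b)
    = f (a + b) - eps / (a + b - eps) * f (a + b) by field; lra.
have e3 : eps / (a + b - eps) <= e.
  rewrite ler_pdivrMr //.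
  have : m <= a + b - eps by lra.
  move=> h; have h2 := ler_wpM2l (ltW e0) h.
  have em : eps = e * m / 2 by [].
  have : 0 < e * m by apply: mulr_gt0.
  lra.
have := ler_wpM2r (ltW fab) e3.
lra.
Qed.

Lemma tau_max_mono : {homo (fun x => tau (Num.max x 0)) : x y / x <= y}.
Proof.
move=> x y xy; apply: tau_mono; first by rewrite le_max lexx orbT.
by rewrite ge_max !le_max xy lexx /= ?orbT ?andbT.
Qed.

Lemma f_cvg0 : f @ (0:R)^'+ --> inf (f @` [set` Interval (BRight (0:R)) +oo%O]).
Proof.
apply: nondecreasing_at_right_cvgr => //.
  move=> x y; rewrite !in_itv /= ?andbT => x0 _ xy; exact: f_mono.
by exists 0 => r [x]; rewrite /= in_itv /= ?andbT => x0 <-; apply: ltW; apply: f_pos.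
Qed.

Lemma dtau0_bounds : 0 <= dtau tau 0 /\ forall x, 0 < x -> dtau tau 0 <= f x.
Proof.
have -> : dtau tau 0 = inf (f @` [set` Interval (BRight (0:R)) +oo%O]).
  by rewrite /dtau ltxx; apply: cvg_lim => //; exact: f_cvg0.
split.
  apply: lb_le_inf; first by exists (f 1), 1 => //=; rewrite in_itv /= ?andbT.
  by move=> r [x]; rewrite /= in_itv /= ?andbT => x0 <-; apply: ltW; apply: f_pos.
move=> x x0; apply: ge_inf; last by exists x => //=; rewrite in_itv /= ?andbT.
by exists 0 => r [y]; rewrite /= in_itv /= ?andbT => y0 <-; apply: ltW; apply: f_pos.
Qed.

Lemma dtau_ge0 x : 0 <= dtau tau x.
Proof.
rewrite /dtau; case: ifP => x0; first by apply: ltW; apply: f_pos.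
by have [h _] := dtau0_bounds; move: h; rewrite /dtau ltxx.
Qed.

Lemma dtau_mono : {homo dtau tau : x y / x <= y}.
Proof.
have [_ h] := dtau0_bounds; move: h; rewrite /dtau ltxx => h.
move=> x y xy; case: ifP => x0; case: ifP => y0.
- exact: f_mono.
- by move: y0; rewrite (lt_le_trans x0 xy).
- exact: h.
- by [].
Qed.

Lemma tau_diff_bound a b c del Del : 0 <= a -> 0 <= b -> 0 <= c ->
  `|b - c| <= del -> `|c - a| <= Del ->
  `|tau b - tau c| <= del * (dtau tau a + f (Del + del + 1)).
Proof.
move=> a0 b0 c0 hbc hca.
have del0 : 0 <= del by apply: le_trans hbc.
have Del0 : 0 <= Del by apply: le_trans hca.
have fp := f_pos (_ : 0 < Del + del + 1).
have da := dtau_ge0 a.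
set M := Num.max b c.
have bM : b <= M by rewrite le_max lexx.
have cM : c <= M by rewrite le_max lexx orbT.
have M0 : 0 <= M by apply: le_trans bM.
have [M00|Mp] := eqVneq M 0.
  have -> : b = c by apply/eqP; rewrite eq_le; apply/andP; split; lra.
  rewrite subrr normr0; apply: mulr_ge0 => //; apply: addr_ge0 => //.
  by apply: ltW; apply: fp; lra.
have Mpos : 0 < M by rewrite lt_def Mp M0.
have Mle : M <= a + Del + del.
  rewrite ge_max; move: hbc hca; rewrite !ler_norml => /andP[h1 h2] /andP[h3 h4].
  apply/andP; split; lra.
have step : `|tau b - tau c| <= f M * `|b - c|.
  have fM := f_pos Mpos.
  have [bc|bc] := leP b c.
    have cMe : M = c by apply/eqP; rewrite eq_le cM ge_max bc lexx.
    rewrite (ler0_norm (x := b - c)) ?subr_le0 // (ler0_norm (x := tau b - tau c)).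
      by rewrite !opprB; have := tau_lip b0 bc; rewrite cMe; apply; rewrite -cMe.
    by rewrite subr_le0; apply: tau_mono.
  have bMe : M = b by apply/eqP; rewrite eq_le bM ge_max lexx ltW.
  rewrite (gtr0_norm (x := b - c)) ?subr_gt0 // (ger0_norm (x := tau b - tau c)).
    by have := tau_lip c0 (ltW bc); rewrite bMe; apply; rewrite -bMe.
  by rewrite subr_ge0; apply: tau_mono => //; apply: ltW.
apply: le_trans step _.
have hfM : f M <= dtau tau a + f (Del + del + 1).
  have [a00|ap] := eqVneq a 0.
    subst a; have : f M <= f (Del + del + 1) by apply: f_mono => //; lra.
    lra.
  have apos : 0 < a by rewrite lt_def ap a0.
  have := f_mono Mpos (_ : M <= a + (Del + del + 1)); rewrite -/M.
  move=> /(_ (ltac:(lra))) h1.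
  have := f_subadd apos (_ : 0 < Del + del + 1); move=> /(_ (ltac:(lra))) h2.
  rewrite /dtau apos; lra.
rewrite mulrC; apply: ler_pM => //; first by apply: ltW; apply: f_pos.
Qed.

End Tau.

Section Meas.
Variables (R : realType) (Q : Type) (d : Q -> Q -> R) (dm : measure_display)
  (Omega : measurableType dm) (P : probability Omega R) (Y : Omega -> Q) (o : Q)
  (tau : R -> R).
Hypotheses (Hh : hadamard d) (HY : d_measurable d Y) (Ht : S0plus tau)
  (Hint : (\int[P]_w (dtau tau (d (Y w) o))%:E < +oo)%E).

Local Notation f := (derive1 tau).

Lemma meas_dist q : measurable_fun setT (fun w => d (Y w) q).
Proof.
apply: (measurability _ (measurable_realfun.RGenOInfty.measurableE R)) => //.
move=> _ [_ [x ->] <-]; rewrite setTI.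
have -> : (fun w => d (Y w) q) @^-1` `]x, +oo[%classic = Y @^-1` [set z | x < d z q].
  by apply/seteqP; split => w /=; rewrite in_itv /= andbT.
apply: HY => z /= hz; exists (d z q - x); first by rewrite subr_gt0.
move=> y hy; have := dtri Hh z y q; lra.
Qed.

Lemma meas_h q : measurable_fun setT (fun w => tau (d (Y w) q)).
Proof.
have -> : (fun w => tau (d (Y w) q)) = (fun x => tau (Num.max x 0)) \o (fun w => d (Y w) q).
  by apply: funext => w /=; rewrite max_l // dge0.
apply: measurableT_comp; last exact: meas_dist.
exact: (measurable_realfun.nondecreasing_measurable measurableT (tau_max_mono Ht)).
Qed.

Lemma meas_dt q : measurable_fun setT (fun w => dtau tau (d (Y w) q)).
Proof.
have -> : (fun w => dtau tau (d (Y w) q)) = dtau tau \o (fun w => d (Y w) q) by [].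
apply: measurableT_comp; last exact: meas_dist.
exact: (measurable_realfun.nondecreasing_measurable measurableT (dtau_mono Ht)).
Qed.

Lemma int_dt : P.-integrable setT (EFin \o (fun w => dtau tau (d (Y w) o))).
Proof.
apply/integrableP; split; first by apply/measurable_realfun.measurable_EFinP; exact: meas_dt.
apply: le_lt_trans Hint; rewrite le_eqVlt; apply/orP; left; apply/eqP.
by apply: eq_integral => w _ /=; rewrite ger0_norm // dtau_ge0.
Qed.

Lemma int_cst (c : R) : P.-integrable setT (EFin \o (fun _ : Omega => c)).
Proof. exact: finite_measure_integrable_cst. Qed.

Lemma int_lin (c k : R) : P.-integrable setT
  (EFin \o (fun w => c * (dtau tau (d (Y w) o) + k))).
Proof.
have := integrableZl measurableT c (integrableD measurableT int_dt (int_cst k)).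
by apply: (eq_integrable measurableT) => w _.
Qed.

Lemma int_diff q q' : P.-integrable setT
  (EFin \o (fun w => tau (d (Y w) q) - tau (d (Y w) q'))).
Proof.
apply: (@le_integrable _ _ _ _ _ measurableT _ (EFin \o (fun w => d q q' *
    (dtau tau (d (Y w) o) + f (d q' o + d q q' + 1))))).
- by apply/measurable_realfun.measurable_EFinP; apply: measurable_funB; apply: meas_h.
- move=> w _ /=; rewrite lee_fin.
  apply: le_trans (ler_norm _).
  apply: (tau_diff_bound Ht) => //; try exact: dge0.
  + rewrite ler_norml; apply/andP; split.
    * have := dtri Hh (Y w) q q'; lra.
    * have := dtri Hh (Y w) q' q; rewrite (dC Hh q' q); lra.
  + rewrite ler_norml; apply/andP; split.
    * have := dtri Hh (Y w) q' o; lra.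
    * have := dtri Hh (Y w) o q'; rewrite (dC Hh o q'); lra.
- exact: int_lin.
Qed.


Local Notation V := (var_fun d P Y tau o).
Definition Kd := Rintegral P setT (fun w => dtau tau (d (Y w) o)).

Lemma V_diff q q' : V q - V q' =
  Rintegral P setT (fun w => tau (d (Y w) q) - tau (d (Y w) q')).
Proof.
rewrite /var_fun -[fine _ - fine _]/(Rintegral P setT _ - Rintegral P setT _).
rewrite -RintegralB //; try exact: int_diff.
by apply: eq_Rintegral => w _; ring.
Qed.

Lemma V_change o' q : var_fun d P Y tau o' q = V q - V o'.
Proof. by rewrite V_diff. Qed.

Lemma int_bound_R (c k : R) : Rintegral P setT (fun w => c * (dtau tau (d (Y w) o) + k))
  = c * (Kd + k).
Proof.
rewrite RintegralZl //; last exact: (integrableD measurableT int_dt (int_cst k)).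
rewrite RintegralD //; [|exact: int_dt|exact: int_cst].
rewrite Rintegral_cst //; congr (_ * (_ + _)).
by rewrite -[RHS]mulr1; congr (_ * _); exact: (congr1 fine (probability_setT P)).
Qed.

Lemma V_cont q q' : `|V q' - V q| <= d q q' * (Kd + f (d q o + d q q' + 1)).
Proof.
have pw w : `|tau (d (Y w) q') - tau (d (Y w) q)| <=
    d q q' * (dtau tau (d (Y w) o) + f (d q o + d q q' + 1)).
  apply: (tau_diff_bound Ht) => //; try exact: dge0.
  + rewrite ler_norml; apply/andP; split.
    * have := dtri Hh (Y w) q' q; rewrite (dC Hh q' q); lra.
    * have := dtri Hh (Y w) q q'; lra.
  + rewrite ler_norml; apply/andP; split.
    * have := dtri Hh (Y w) q o; lra.
    * have := dtri Hh (Y w) o q; rewrite (dC Hh o q); lra.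
rewrite ler_norml; apply/andP; split.
  rewrite -opprB lerN2 V_diff -int_bound_R.
  apply: le_Rintegral => //; [exact: int_diff|exact: int_lin|].
  move=> w _; apply: le_trans (pw w); rewrite distrC; exact: ler_norm.
rewrite V_diff -int_bound_R.
apply: le_Rintegral => //; [exact: int_diff|exact: int_lin|].
move=> w _; apply: le_trans (pw w); exact: ler_norm.
Qed.


Lemma V_convex : d_convex_fun d V.
Proof.
move=> q p g qp geo x y t hx hy ht /=.
set u := (1 - t) * x + t * y.
have HC := geo_CN Hh geo hx hy ht; rewrite -/u in HC.
have pw w : tau (d (Y w) (g u)) - tau (d (Y w) o) <=
   (1 - t) * (tau (d (Y w) (g x)) - tau (d (Y w) o)) +
   t * (tau (d (Y w) (g y)) - tau (d (Y w) o)).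
  have h1 := CN_dconvex Hh (Y w) ht HC.
  have h3 := tau_cvx Ht (dge0 Hh (Y w) (g x)) (dge0 Hh (Y w) (g y)) ht.
  have h2 := tau_mono Ht (dge0 Hh _ _) h1.
  lra.
have i1 := int_diff (g x) o; have i2 := int_diff (g y) o.
have e : (1 - t) * V (g x) + t * V (g y) = Rintegral P setT (fun w =>
   (1 - t) * (tau (d (Y w) (g x)) - tau (d (Y w) o)) +
   t * (tau (d (Y w) (g y)) - tau (d (Y w) o))).
  rewrite RintegralD //; last first.
    - exact: (integrableZl measurableT t i2).
    - exact: (integrableZl measurableT (1 - t) i1).
  by rewrite !RintegralZl.
rewrite e; apply: le_Rintegral => //; first exact: int_diff.
have := integrableD measurableT (integrableZl measurableT (1 - t) i1)
  (integrableZl measurableT t i2).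
by apply: (eq_integrable measurableT) => w _.
Qed.


Definition Gn (n : nat) (w : Omega) : R :=
  if d (Y w) o <= n%:R then f 1 + dtau tau (d (Y w) o) else 0.

Lemma m1_pos : 0 < f 1.
Proof. exact: (f_pos Ht ltr01). Qed.

Lemma Gn_ge0 n w : 0 <= Gn n w.
Proof.
rewrite /Gn; case: ifP => // _; apply: addr_ge0; [exact: ltW m1_pos|exact: dtau_ge0].
Qed.

Lemma meas_Gn n : measurable_fun setT (Gn n).
Proof.
apply: measurable_fun_ifT.
- apply: measurable_fun_ler; [exact: meas_dist|exact: measurable_cst].
- apply: measurable_funD; [exact: measurable_cst|exact: meas_dt].
- exact: measurable_cst.
Qed.

Lemma int_Gn n : P.-integrable setT (EFin \o Gn n).
Proof.
apply: (@le_integrable _ _ _ _ _ measurableT _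
   (EFin \o (fun w => 1 * (dtau tau (d (Y w) o) + f 1)))).
- by apply/measurable_EFinP; exact: meas_Gn.
- move=> w _ /=; rewrite lee_fin ger0_norm ?Gn_ge0 // mul1r.
  have h := dtau_ge0 Ht (d (Y w) o); have h1 := m1_pos.
  rewrite ger0_norm; last by lra.
  rewrite /Gn; case: ifP => _; lra.
- exact: int_lin.
Qed.

Lemma Gn_big : exists n : nat, Kd + f 1 / 2 <= Rintegral P setT (Gn n).
Proof.
set L := (\int[P]_w ((f 1 + dtau tau (d (Y w) o))%:E))%E.
have iL : P.-integrable setT (EFin \o (fun w => f 1 + dtau tau (d (Y w) o))).
  have := int_lin 1 (f 1); apply: (eq_integrable measurableT) => w _ /=.
  by rewrite mul1r addrC.
have LE : L = (f 1 + Kd)%:E.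
  rewrite -[L](@fineK R); last exact: integrable_fin_num iL.
  congr EFin; rewrite -[fine L]/(Rintegral P setT _).
  rewrite RintegralD //; [|exact: int_cst|exact: int_dt].
  rewrite Rintegral_cst //; congr (_ + _).
  by rewrite -[RHS]mulr1; congr (_ * _); exact: (congr1 fine (probability_setT P)).
have mc := @cvg_monotone_convergence _ _ _ P setT measurableT (fun n => EFin \o Gn n).
have cv : (\int[P]_(x in setT) ((EFin \o Gn n) x))%E @[n --> \oo] --> L.
  have -> : L = (\int[P]_(x in setT) limn (fun n => (EFin \o Gn n) x))%E.
    rewrite /L; apply: eq_integral => w _.
    apply/esym/cvg_lim => //; apply: cvg_near_cst.
    near=> n; rewrite /= /Gn ifT //.
    near: n; exact: nbhs_infty_ger.
  apply: mc.
  - by move=> n; apply/measurable_EFinP; exact: meas_Gn.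
  - by move=> n w _; rewrite /= lee_fin Gn_ge0.
  - move=> w _ n m nm; rewrite /= lee_fin /Gn.
    case: ifP => hn; case: ifP => hm //.
    + by move: hm; rewrite (le_trans hn) // ler_nat.
    + by apply: addr_ge0; [exact: ltW m1_pos|exact: dtau_ge0].
have [//|hn] := pselect (exists n : nat, Kd + f 1 / 2 <= Rintegral P setT (Gn n)).
exfalso.
have h1 := m1_pos.
suff : (L <= (Kd + f 1 / 2)%:E)%E by rewrite LE lee_fin; lra.
apply: (cvge_to_le cv).
near=> n.
rewrite -(fineK (integrable_fin_num measurableT (int_Gn n))) lee_fin.
apply/ltW; rewrite ltNge; apply/negP => h; apply: hn; exists n; exact: h.
Unshelve. all: by end_near.
Qed.


Lemma intB (F G : Omega -> R) : P.-integrable setT (EFin \o F) ->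
  P.-integrable setT (EFin \o G) -> P.-integrable setT (EFin \o (fun w => F w - G w)).
Proof.
move=> iF iG; have := integrableB measurableT iF iG.
by apply: (eq_integrable measurableT) => w _.
Qed.

Lemma intZ (c : R) (F : Omega -> R) : P.-integrable setT (EFin \o F) ->
  P.-integrable setT (EFin \o (fun w => c * F w)).
Proof.
move=> iF; have := integrableZl measurableT c iF.
by apply: (eq_integrable measurableT) => w _.
Qed.

Lemma V_coercive : exists al be : R, 0 < al /\ forall q, al * d q o - be <= V q.
Proof.
have [n hn] := Gn_big.
have h1 := m1_pos.
have taun := tau_ge0 Ht (ler0n R n).
set C := f 1 * (n%:R + 1) + tau n%:R.
have C0 : 0 <= C by rewrite /C; apply: addr_ge0 => //; apply: mulr_ge0; [lra|apply: addr_ge0; rewrite ?ler0n].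
exists (f 1 / 2), C; split; first by apply: divr_gt0.
move=> q; set D := d q o.
have D0 : 0 <= D := dge0 Hh q o.
have pw w : D * (Gn n w - dtau tau (d (Y w) o)) - C <=
    tau (d (Y w) q) - tau (d (Y w) o).
  set a := d (Y w) o; set b := d (Y w) q.
  have a0 : 0 <= a := dge0 Hh _ _; have b0 : 0 <= b := dge0 Hh _ _.
  have t1 : D <= b + a by have := dtri Hh q (Y w) o; rewrite (dC Hh q (Y w)).
  have t2 : a <= b + D by exact: dtri.
  have dta := dtau_ge0 Ht a.
  rewrite /Gn -/a; case: ifP => an.
    have e : f 1 + dtau tau a - dtau tau a = f 1 by ring.
    rewrite e.
    have tb := tau_lin Ht ltr01 b0.
    have ta := tau_mono Ht a0 an.
    rewrite /C; nra.
  have apos : 0 < a by apply: le_lt_trans (ler0n R n) _; rewrite ltNge an.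
  have DD : 0 <= D * dtau tau a by apply: mulr_ge0.
  have [ab|ab] := leP a b.
    have := tau_mono Ht a0 ab; lra.
  have := tau_lip Ht b0 (ltW ab) apos.
  have e : dtau tau a = f a by rewrite /dtau apos.
  rewrite e in DD *.
  have fa := f_pos Ht apos.
  have : f a * (a - b) <= f a * D by apply: ler_wpM2l; lra.
  lra.
have iG := intB (int_Gn n) (int_dt).
have iL := intB (intZ D iG) (int_cst C).
have := le_Rintegral measurableT iL (int_diff q o) (fun w _ => pw w).
rewrite -/(V q) -[Rintegral _ _ (fun w => tau _ - tau _)]/(V q).
rewrite RintegralB //; [|exact: intZ|exact: int_cst].
rewrite RintegralZl // RintegralB //; [|exact: int_Gn|exact: int_dt].
rewrite Rintegral_cst //.
have -> : fine (P setT) = 1 by exact: (congr1 fine (probability_setT P)).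
rewrite mulr1 -/Kd => h.
have : D * (f 1 / 2) <= D * (Rintegral P setT (Gn n) - Kd).
  by apply: ler_wpM2l => //; lra.
lra.
Qed.


Lemma V_strict (A : set Omega) p q : measurable A -> P A = 1%E ->
  (forall w, A w -> d (Y w) p < d (Y w) q) -> V p < V q.
Proof.
move=> mA PA hA.
set F := fun w => tau (d (Y w) p) - tau (d (Y w) q).
have FA w : A w -> F w < 0.
  by move=> Aw; rewrite /F subr_lt0; apply: (tau_smono Ht (dge0 Hh _ _) (hA w Aw)).
have iF := int_diff p q.
have mF : measurable_fun setT F by apply: measurable_funB; apply: meas_h.
have PC : P (~` A) = 0%E by rewrite probability_setC // PA subee.
have iabs : P.-integrable setT (EFin \o (fun w => `|F w|)).
  have := integrable_abse iF.
  by apply: (eq_integrable measurableT) => w _.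
have e1 : V p - V q = Rintegral P setT (fun w => - `|F w|).
  rewrite V_diff; congr fine.
  apply: (ae_eq_integral (fun w => (- `|F w|)%:E)) => //.
  - by apply/measurable_EFinP.
  - by apply/measurable_EFinP; apply: measurableT_comp => //; apply: measurableT_comp.
  - exists (~` A); split => //; first exact: measurableC.
    move=> w /= hw Aw; apply: hw => _.
    by rewrite /F ltr0_norm ?opprK //; exact: FA.
have e2 : Rintegral P setT (fun w => - `|F w|) = - Rintegral P setT (fun w => `|F w|).
  rewrite -mulN1r -RintegralZl //.
  by apply: eq_Rintegral => w _; rewrite mulN1r.
rewrite ltNge; apply/negP => H.
have I0 : Rintegral P setT (fun w => `|F w|) = 0.
  apply/eqP; rewrite eq_le; apply/andP; split; last first.
    by apply: Rintegral_ge0 => w _.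
  have := subr_ge0 (V q) (V p); rewrite H e1 e2; lra.
have I0' : (\int[P]_w `|(EFin \o F) w|)%E = 0%E.
  rewrite -(fineK (integrable_fin_num measurableT iabs)).
  by rewrite -[fine _]/(Rintegral P setT _) I0.
have [B [mB PB sub]] := (ae_eq_integral_abs P measurableT (f := EFin \o F)
  (ltac:(by apply/measurable_EFinP))).1 I0'.
have AB : A `<=` B.
  move=> w Aw; apply: sub => /= h.
  have := h I; move=> [] => e; have := FA w Aw; rewrite e; lra.
have : (1 <= 0 :> \bar R)%E.
  rewrite -[X in (X <= _)%E]PA -[X in (_ <= X)%E]PB.
  exact: (le_measure P (mem_set mA) (mem_set mB) AB).
by rewrite lee_fin; lra.
Qed.

End Meas.
Section Abs.
Variables (R : realType) (Q : Type) (d : Q -> Q -> R) (V : Q -> R) (o : Q).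
Hypotheses (Hh : hadamard d)
  (Vc : forall q e, 0 < e -> exists2 r, 0 < r & forall q', d q q' < r -> `|V q' - V q| < e)
  (Vconv : d_convex_fun d V)
  (Vcoer : exists al be : R, 0 < al /\ forall q, al * d q o - be <= V q).

Definition lev c := [set q | V q <= c].

Lemma lev_closed c : d_closed d (lev c).
Proof.
move=> x H; rewrite /lev /=; rewrite leNgt; apply/negP => hx.
have hx' : 0 < V x - c by rewrite subr_gt0.
have [r r0 hr] := Vc x hx'.
have [y [hy dy]] := H r r0.
have := hr y dy; rewrite /lev /= in hy.
rewrite ltr_norml => /andP[h1 h2]; lra.
Qed.

Lemma lev_convex c : d_convex_set d (lev c).
Proof.
move=> q p g Sq Sp qp geo t /andP[t0 t1].
have D0 : 0 < d q p.
  rewrite lt_def (dge0 Hh q p) andbT; apply/eqP => /(d_eq0 Hh); exact: qp.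
set l := t / d q p.
have hl : 0 <= l <= 1.
  apply/andP; split; first by apply: divr_ge0 => //; exact: ltW.
  by rewrite ler_pdivrMr // mul1r.
have h0 : (0:R) <= 0 <= d q p by apply/andP; split; lra.
have hD : 0 <= d q p <= d q p by apply/andP; split; lra.
have := Vconv qp geo h0 hD hl.
have -> : (1 - l) * 0 + l * d q p = t by rewrite mulr0 add0r /l mulfVK // gt_eqF.
case: geo => g0 g1 _; rewrite /= g0 g1.
rewrite /lev /= in Sq Sp *; move: hl => /andP[l0 l1]; nra.
Qed.

Lemma lev_bounded c : d_bounded d (lev c).
Proof.
have [al [be [al0 H]]] := Vcoer.
exists o, ((c + be) / al) => q hq; rewrite /lev /= in hq.
rewrite ler_pdivlMr // (dC Hh o q); have := H q; lra.
Qed.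

Lemma V_lb : exists b, forall q, b <= V q.
Proof.
have [al [be [al0 H]]] := Vcoer.
exists (- be) => q; have := H q; have := dge0 Hh q o; nra.
Qed.

Definition vmin := inf (range V).

Lemma vmin_lb q : vmin <= V q.
Proof.
have [b hb] := V_lb.
apply: ge_inf; last by exists q.
by exists b => _ [p _ <-].
Qed.

Lemma vmin_adh e : 0 < e -> exists q, V q < vmin + e.
Proof.
move=> e0; have [b hb] := V_lb.
have hi : has_inf (range V) by split; [exists (V o), o | exists b => _ [p _ <-]].
by have [_ [q _ <-] h] := inf_adherent e0 hi; exists q.
Qed.

Lemma argminE : argmin V = lev vmin.
Proof.
apply/seteqP; split => q /=.
  move=> h; apply: lb_le_inf; first by exists (V o), o.
  by move=> _ [p _ <-]; apply: h.
by move=> h p; apply: le_trans h (vmin_lb p).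
Qed.

Lemma argmin_nonempty : argmin V !=set0.
Proof.
set S := fun n : nat => lev (vmin + n.+1%:R^-1).
have Sne n : S n !=set0.
  have i0 : 0 < (n.+1%:R : R)^-1 by rewrite invr_gt0 ltr0n.
  by have [q hq] := vmin_adh i0; exists q; apply: ltW.
have H n := proj_exists Hh o (Sne n) (@lev_closed (vmin + n.+1%:R^-1)) (@lev_convex (vmin + n.+1%:R^-1)).
have [pp Hp] := choice H.
have Ssub n k : (n <= k)%N -> S k `<=` S n.
  move=> nk q; rewrite /S /lev /= => h; apply: le_trans h _.
  by rewrite lerD2l; apply: inv_mono.
have key n k : (n <= k)%N ->
    d (pp n) (pp k) ^+ 2 <= d o (pp k) ^+ 2 - d o (pp n) ^+ 2.
  move=> nk; have [_ h] := Hp n; apply: h; apply: (Ssub n k nk); by case: (Hp k).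
set r := fun n => d o (pp n) ^+ 2.
have rmono n k : (n <= k)%N -> r n <= r k.
  move=> nk; have := key n k nk; have := sqr_ge0 (d (pp n) (pp k)); rewrite /r; lra.
have [al [be [al0 Hco]]] := Vcoer.
set B := ((vmin + 1 + be) / al) ^+ 2.
have rB n : r n <= B.
  have [Sn _] := Hp n.
  have Sn0 : S 0 (pp n) by apply: (Ssub 0 n (leq0n n)).
  rewrite /S /lev /= invr1 in Sn0.
  have h := Hco (pp n).
  rewrite /r /B; apply: lerXn2r; rewrite ?nnegrE ?(dge0 Hh) //.
    have := dge0 Hh (pp n) o; move=> h2; apply: divr_ge0; last exact: ltW.
    have := vmin_lb (pp n); nra.
  by rewrite ler_pdivlMr // (dC Hh o); lra.
have hs : has_sup (range r) by split; [exists (r 0), 0 | exists B => _ [n _ <-]].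
have Cau : forall e, 0 < e -> exists N, forall m n, (N <= m)%N -> (N <= n)%N ->
    d (pp m) (pp n) < e.
  move=> e e0.
  have [_ [N _ <-] hN] := sup_adherent (mulr_gt0 e0 e0) hs.
  exists N => m n hm hn.
  have ub k : r k <= sup (range r) by apply: ub_le_sup; [case: hs|exists k].
  suff : d (pp m) (pp n) ^+ 2 < e * e.
    move=> h; rewrite !expr2 in h; have := dge0 Hh (pp m) (pp n); nra.
  have [mn|nm] := leqP m n.
    move: (key m n mn) (rmono N m hm) (ub n) hN; rewrite /r.
    set A := sup _; set B1 := d o (pp n) ^+ 2; set B2 := d o (pp m) ^+ 2; set B3 := d o (pp N) ^+ 2.
    lra.
  move: (key n m (ltnW nm)) (rmono N n hn) (ub m) hN; rewrite /r (dC Hh (pp n)).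
  set A := sup _; set B1 := d o (pp n) ^+ 2; set B2 := d o (pp m) ^+ 2; set B3 := d o (pp N) ^+ 2.
  lra.
have [p Hpl] := dcompl Hh Cau.
have Sp n : S n p.
  apply: lev_closed => e e0.
  have [N hN] := Hpl e e0.
  set k := maxn n N.
  exists (pp k); split; first by apply: (Ssub n k (leq_maxl _ _)); case: (Hp k).
  by rewrite dC //; apply: hN; exact: leq_maxr.
exists p; rewrite argminE /lev /=.
apply: le_approx (ler01) _ => e e0 e1.
have [n hn] := small_inv e0.
have := Sp n; rewrite /S /lev /=; move: hn; move: (n.+1%:R^-1) => i; lra.
Qed.

End Abs.

Unset Implicit Arguments.
Set Strict Implicit.

Theorem mainTheorem6 (R : realType) (Q : Type) (d : Q -> Q -> R)
  (dm : measure_display) (Omega : measurableType dm) (P : probability Omega R)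
  (Y : Omega -> Q) (o : Q) (tau : R -> R) :
  hadamard d -> d_measurable d Y -> S0plus tau ->
  (\int[P]_w (dtau tau (d (Y w) o))%:E < +oo)%E ->
  (* (i) *)
  ((forall q, P.-integrable setT (fun w => (tau (d (Y w) q) - tau (d (Y w) o))%:E))
   /\ d_convex_fun d (var_fun d P Y tau o)) /\
  (* (ii) *)
  (let M := argmin (var_fun d P Y tau o) in
   [/\ M !=set0, d_closed d M, d_bounded d M, d_convex_set d M &
       forall o' : Q, argmin (var_fun d P Y tau o') = M]) /\
  (* (iii) *)
  (forall Yset : set Q, d_closed d Yset -> d_convex_set d Yset ->
     P (Y @^-1` Yset) = 1%E ->
     argmin (var_fun d P Y tau o) `<=` Yset).
Proof.
move=> Hh HY Ht Hint.
set V := var_fun d P Y tau o.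
have Kd0 : 0 <= Kd d P Y o tau.
  by apply: Rintegral_ge0 => w _; exact: dtau_ge0.
have Vc : forall q e, 0 < e -> exists2 r, 0 < r &
    forall q', d q q' < r -> `|V q' - V q| < e.
  move=> q e e0.
  set c := Kd d P Y o tau + derive1 tau (d q o + 2).
  have fp : 0 < derive1 tau (d q o + 2).
    by apply: (f_pos Ht); have := dge0 Hh q o; lra.
  have c0 : 0 < c by rewrite /c; lra.
  exists (Num.min 1 (e / c)).
    by rewrite lt_min ltr01 divr_gt0.
  move=> q' hq'.
  have h1 : d q q' < 1 by move: hq'; rewrite lt_min => /andP[].
  have h2 : d q q' < e / c by move: hq'; rewrite lt_min => /andP[].
  apply: le_lt_trans (V_cont Hh HY Ht Hint q q') _.
  have fm : derive1 tau (d q o + d q q' + 1) <= derive1 tau (d q o + 2).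
    apply: (f_mono Ht); last by lra.
    have := dge0 Hh q o; have := dge0 Hh q q'; lra.
  have dd := dge0 Hh q q'.
  have : d q q' * c < e by rewrite -ltr_pdivlMr.
  rewrite /c; nra.
have Vconv : d_convex_fun d V := V_convex Hh HY Ht Hint.
have Vcoer := V_coercive Hh HY Ht Hint.
have AE := argminE Hh Vcoer.
split.
  split; last exact: Vconv.
  move=> q; exact: (int_diff Hh HY Ht Hint q o).
split.
  rewrite /=; split.
  - exact: (argmin_nonempty Hh Vc Vconv Vcoer).
  - rewrite -/V AE; exact: (@lev_closed _ _ _ _ Vc).
  - rewrite -/V AE; exact: (lev_bounded Hh Vcoer).
  - rewrite -/V AE; exact: (@lev_convex _ _ _ _ Hh Vconv).
  - move=> o'; apply/seteqP; split => q /= h p; have := h p;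
      rewrite !(V_change Hh HY Ht Hint o') -/V; lra.
move=> Yset clY cvY PY q hq.
apply: contrapT => nq.
have mC : measurable (Y @^-1` (~` Yset)).
  apply: HY => x /= nx.
  have : ~ (forall e, 0 < e -> exists y, Yset y /\ d x y < e) by move=> H; apply: nx; apply: clY.
  move=> /existsNP [e /not_implyP [e0 /forallNP H]].
  exists e => // y dy Yy; apply: (H y); split => //.
have mA : measurable (Y @^-1` Yset).
  have -> : Y @^-1` Yset = ~` (Y @^-1` (~` Yset)) by rewrite preimage_setC setCK.
  exact: measurableC.
have Yne : Yset !=set0.
  apply/set0P/negP => /eqP Y0; move: PY; rewrite Y0 preimage_set0 measure0.
  move=> /(congr1 fine) /= h; move: h; lra.
have [p [Yp Hp]] := proj_exists Hh q Yne clY cvY.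
have qp : 0 < d q p.
  rewrite lt_def (dge0 Hh q p) andbT; apply/eqP => /(d_eq0 Hh) e.
  by apply: nq; rewrite e.
have lt : V p < V q.
  apply: (V_strict Hh HY Ht Hint mA PY) => w /= Yw.
  have := Hp _ Yw; rewrite (dC Hh p) (dC Hh q) => h.
  have g1 := dge0 Hh (Y w) p; have g2 := dge0 Hh (Y w) q.
  rewrite !expr2 in h; nra.
have := hq p; rewrite -/V; lra.
Qed.
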